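(* Let $G$ be a graph with a pendant vertex $v$ (a vertex of degree one). Then $p(G)=p(G-v)$.
   Context: All graphs are finite and simple. For an acyclic digraph $D$, the phylogeny graph $P(D)$ is the graph on $V(D)$ in which distinct vertices $u,v$ are adjacent if and only if $(u,v)\in A(D)$, or $(v,u)\in A(D)$, or there is a vertex $w$ with $(u,w),(v,w)\in A(D)$. A phylogeny digraph for a graph $G$ is an acyclic digraph $D$ such that $G$ is an induced subgraph of $P(D)$ and $D$ has no arc from a vertex of $V(D)\setminus V(G)$ to a vertex of $V(G)$. The phylogeny number $p(G)$ is the minimum of $|V(D)\setminus V(G)|$ over all phylogeny digraphs $D$ for $G$. *)

(* Defs.v *)
From mathcomp Require Import all_boot.
From Stdlib Require Import ClassicalEpsilon.
Set Implicit Arguments. Unset Strict Implicit. Unset Printing Implicit Defensive.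

(* A finite simple graph is a symmetric irreflexive relation e : rel T on a
   finType T (the vertex set V(G) = T).

   A candidate phylogeny digraph for G with k extra vertices has vertex set
   T + 'I_k (the extra vertices V(D) \ V(G) are the inr's) and arc relation
   given by a finite function A : {ffun V*V -> bool}, arc (u,w) iff A (u,w). *)

Definition pvert (T : finType) (k : nat) : finType := (T + 'I_k)%type.

Section Phylo.
Variables (T : finType) (k : nat).
Local Notation V := (pvert T k).

Definition arc (A : {ffun V * V -> bool}) : rel V := fun u w => A (u, w).

Definition acyclicb (A : {ffun V * V -> bool}) : bool :=
  [forall u : V, forall w : V, arc A u w ==> ~~ connect (arc A) w u].

Definition padj (A : {ffun V * V -> bool}) (u w : V) : bool :=
  [|| arc A u w, arc A w u | [exists x : V, arc A u x && arc A w x]].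

Definition phylo_digraph (e : rel T) (A : {ffun V * V -> bool}) : bool :=
  [&& acyclicb A,
      [forall x : T, forall y : T, (x != y) ==> (e x y == padj A (inl x) (inl y))]
    &
      [forall i : 'I_k, forall x : T, ~~ arc A (inr i) (inl x)]].
End Phylo.

Definition has_phylo (T : finType) (e : rel T) (k : nat) : bool :=
  [exists A : {ffun pvert T k * pvert T k -> bool}, phylo_digraph e A].

(* phylogeny number p(G): the least k such that has_phylo e k.
   (Such k always exists for a simple graph; the default 0 is never used
   for simple graphs.) *)
Definition phylo_number (T : finType) (e : rel T) : nat :=
  match excluded_middle_informative (exists k, has_phylo e k) with
  | left H => ex_minn H
  | right _ => 0
  end.

Definition del_vertex (T : finType) (e : rel T) (v : T) : rel {x : T | x != v} :=
  fun x y => e (val x) (val y).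
Arguments del_vertex {T} e v.

(* Main.v *)
Require Import Defs.
From mathcomp Require Import all_boot.
From Stdlib Require Import ClassicalEpsilon.
Set Implicit Arguments. Unset Strict Implicit. Unset Printing Implicit Defensive.
Local Notation arc := Defs.arc.

Lemma rank_connect (V : finType) (R : rel V) (r : V -> nat) :
  (forall a b, R a b -> r a < r b) -> forall a b, connect R a b -> r a <= r b.
Proof.
move=> H a b /connectP [p]; elim: p a => [|c p IH] a /=.
  by move=> _ ->.
move=> /andP[Hac Hp] Hl.
exact: leq_trans (ltnW (H _ _ Hac)) (IH _ Hp Hl).
Qed.

Lemma acyclic_of_rank (T : finType) (k : nat) (A : {ffun pvert T k * pvert T k -> bool})
  (r : pvert T k -> nat) :
  (forall a b, arc A a b -> r a < r b) -> acyclicb A.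
Proof.
move=> H; apply/forallP => a; apply/forallP => b; apply/implyP => Hab.
apply/negP => Hc.
have := rank_connect H Hc; have := H _ _ Hab.
by move=> h1; rewrite leqNgt h1.
Qed.

Lemma rank_of_acyclic (T : finType) (k : nat) (A : {ffun pvert T k * pvert T k -> bool}) :
  acyclicb A -> exists r : pvert T k -> nat, forall a b, arc A a b -> r a < r b.
Proof.
move=> Hac; exists (fun a => #|[pred c | connect (arc A) c a]|) => a b Hab.
apply: proper_card; apply/properP; split.
  apply/subsetP => c; rewrite !inE => Hc.
  exact: connect_trans Hc (connect1 Hab).
exists b; first by rewrite !inE connect0.
by rewrite !inE; have := implyP (forallP (forallP Hac a) b) Hab.
Qed.

Section Main.
Variables (T : finType) (e : rel T) (e_sym : symmetric e) (e_irr : irreflexive e)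
  (v u : T) (Hu : forall y, e v y = (y == u)) (k : nat).
Local Notation S := {x : T | x != v}.

Definition gmap (a : pvert S k) : pvert T k :=
  match a with inl x => inl (val x) | inr i => inr i end.
Definition proj (a : pvert T k) : option (pvert S k) :=
  match a with
  | inl x => match (insub x : option S) with Some s => Some (inl s) | None => None end
  | inr i => Some (inr i) end.

Lemma projg a : proj (gmap a) = Some a.
Proof. by case: a => [x|i] //=; rewrite valK. Qed.

Lemma proj_none a : proj a = None -> a = inl v.
Proof.
case: a => [x|i] //=.
by case: insubP => [s _ _ //| /negbNE/eqP -> //].
Qed.

Lemma proj_some a a' : proj a = Some a' -> gmap a' = a.
Proof.
case: a => [x|i] /=; last by case=> <-.
by case: insubP => [s _ <- [<-] //| _ //].
Qed.

Lemma proj_inlv : proj (inl v) = None.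
Proof. by rewrite /= insubF // eqxx. Qed.

Definition restrA (A : {ffun pvert T k * pvert T k -> bool}) :
  {ffun pvert S k * pvert S k -> bool} := [ffun p => A (gmap p.1, gmap p.2)].

Lemma arcR A a b : arc (restrA A) a b = arc A (gmap a) (gmap b).
Proof. by rewrite /Defs.arc ffunE. Qed.

Lemma adj_v (A : {ffun pvert T k * pvert T k -> bool}) x : [forall x : T, forall y : T, (x != y) ==> (e x y == padj A (inl x) (inl y))] ->
  x != v -> arc A (inl x) (inl v) -> x = u.
Proof.
move=> Hadj Hx h.
have := implyP (forallP (forallP Hadj x) v) Hx.
rewrite /padj h /= => /eqP.
by rewrite e_sym Hu => /eqP.
Qed.

Lemma dir1 A : phylo_digraph e A -> phylo_digraph (del_vertex e v) (restrA A).
Proof.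
case/and3P => Hac Hadj Hin; apply/and3P; split.
- have [r Hr] := rank_of_acyclic Hac.
  apply: (@acyclic_of_rank _ _ _ (fun a => r (gmap a))) => a b; rewrite arcR; exact: Hr.
- apply/forallP => x; apply/forallP => y; apply/implyP => Hxy.
  have Hxy' : val x != val y by rewrite (inj_eq val_inj).
  have := implyP (forallP (forallP Hadj (val x)) (val y)) Hxy'.
  rewrite /del_vertex => /eqP ->.
  rewrite /padj !arcR /=.
  apply/eqP; congr (_ || (_ || _)).
  apply/existsP/existsP.
  + case=> z /andP[h1 h2].
    case Hz: (proj z) => [z'|].
      by exists z'; rewrite !arcR (proj_some Hz) h1 h2.
    move/proj_none: Hz => Hz; subst z.
    have ex := adj_v Hadj (valP x) h1.
    have ey := adj_v Hadj (valP y) h2.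
    by move: Hxy'; rewrite ex ey eqxx.
  + case=> z; rewrite !arcR => /andP[h1 h2]; exists (gmap z); by rewrite h1 h2.
- apply/forallP => i; apply/forallP => x; rewrite arcR /=.
  exact: (forallP (forallP Hin i) (val x)).
Qed.

Lemma uv : (u == v) = false.
Proof.
apply/eqP => E; move: (Hu u); rewrite eqxx {1}E e_irr //.
Qed.

Definition extA (A' : {ffun pvert S k * pvert S k -> bool}) :
  {ffun pvert T k * pvert T k -> bool} :=
  [ffun p => match proj p.1, proj p.2 with
             | Some a, Some b => A' (a, b)
             | _, _ => (p.1 == inl u) && (p.2 == inl v) end].

Lemma arcE A' a b : arc (extA A') a b = match proj a, proj b with
             | Some a, Some b => A' (a, b)
             | _, _ => (a == inl u) && (b == inl v) end.
Proof. by rewrite /Defs.arc ffunE. Qed.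

Lemma arcE_g A' a b : arc (extA A') (gmap a) (gmap b) = arc A' a b.
Proof. by rewrite arcE !projg. Qed.

Lemma arc_from_v A' b : arc (extA A') (inl v) b = false.
Proof. rewrite arcE proj_inlv; apply/negbTE; rewrite negb_and; apply/orP; left; apply/eqP => -[E]; by move: uv; rewrite E eqxx. Qed.

Lemma arc_to_v A' a : arc (extA A') a (inl v) = (a == inl u).
Proof. by rewrite arcE proj_inlv; case: (proj a); rewrite eqxx andbT. Qed.

Lemma dir2 A' : phylo_digraph (del_vertex e v) A' -> phylo_digraph e (extA A').
Proof.
case/and3P => Hac Hadj Hin; apply/and3P; split.
- have [r Hr] := rank_of_acyclic Hac.
  have uv' : u != v by rewrite uv.
  pose u' : S := exist _ u uv'.
  apply: (@acyclic_of_rank _ _ _ (fun a => match proj a with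
            Some a' => r a' | None => (r (inl u')).+1 end)) => a b.
  case Ha: (proj a) => [a'|]; case Hb: (proj b) => [b'|].
  + by rewrite arcE Ha Hb => /Hr.
  + move/proj_none: Hb => ->; rewrite arc_to_v => /eqP E; subst a.
    move: Ha; rewrite -[inl u]/(gmap (inl u')) projg => -[<-]; exact: ltnSn.
  + by move/proj_none: Ha => ->; rewrite arc_from_v.
  + by move/proj_none: Ha => ->; rewrite arc_from_v.
- apply/forallP => x; apply/forallP => y; apply/implyP => Hxy.
  have Hnex : forall w, [exists z, arc (extA A') (inl v) z && arc (extA A') (inl w) z] = false.
    by move=> w; apply/existsP => -[z]; rewrite arc_from_v.
  case: (eqVneq x v) => [Ex|xv].
    subst x; rewrite /padj arc_from_v arc_to_v Hnex Hu /= orbF.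
    by case: (y =P u) => [->|/eqP]; rewrite ?eqxx //; case: eqP => // -[->]; rewrite eqxx.
  case: (eqVneq y v) => [Ey|yv].
    subst y; rewrite /padj.
    have -> : [exists z, arc (extA A') (inl x) z && arc (extA A') (inl v) z] = false.
      by apply/existsP => -[z]; rewrite arc_from_v andbF.
    rewrite arc_from_v arc_to_v e_sym Hu /= ?orbF.
    by case: (x =P u) => [->|/eqP]; rewrite ?eqxx //; case: eqP => // -[->]; rewrite eqxx.
  pose x' : S := exist _ x xv; pose y' : S := exist _ y yv.
  have Hxy' : x' != y' by rewrite -(inj_eq val_inj).
  have := implyP (forallP (forallP Hadj x') y') Hxy'.
  rewrite /del_vertex /= => /eqP ->.
  rewrite -[inl x]/(gmap (inl x')) -[inl y]/(gmap (inl y')) /padj !arcE_g.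
  apply/eqP; congr (_ || (_ || _)).
  apply/existsP/existsP.
  + case=> z /andP[h1 h2]; exists (gmap z); by rewrite !arcE_g h1 h2.
  + case=> z /andP[h1 h2].
    case Hz: (proj z) => [z'|].
      by exists z'; move: h1 h2; rewrite -(proj_some Hz) !arcE_g => -> ->.
    move/proj_none: Hz => Hz; subst z.
    move: h1 h2; rewrite !arc_to_v /= => /eqP[ex] /eqP[ey].
    by move: Hxy; rewrite ex ey eqxx.
- apply/forallP => i; apply/forallP => x.
  case: (eqVneq x v) => [->|xv]; first by rewrite arc_to_v.
  pose x' : S := exist _ x xv.
  rewrite -[inl x]/(gmap (inl x')) -[inr i]/(gmap (inr i)) arcE_g.
  exact: (forallP (forallP Hin i) x').
Qed.

Lemma eq_has : has_phylo e k = has_phylo (del_vertex e v) k.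
Proof.
apply/existsP/existsP => -[A HA].
  by exists (restrA A); exact: dir1.
by exists (extA A); exact: dir2.
Qed.

End Main.

Theorem mainTheorem6 (T : finType) (e : rel T)
  (e_sym : symmetric e) (e_irr : irreflexive e)
  (v : T) (v_pendant : #|[pred y | e v y]| = 1) :
  phylo_number e = phylo_number (del_vertex e v).
Proof.
have [u Hu0] := mem_card1 v_pendant.
have Hu : forall y, e v y = (y == u) by move=> y; have := Hu0 y; rewrite !inE.
have E := eq_has e_sym e_irr Hu.
rewrite /phylo_number.
case: excluded_middle_informative => H1; case: excluded_middle_informative => H2 //.
- by apply: eq_ex_minn => kk; rewrite E.
- by exfalso; apply: H2; case: H1 => kk; rewrite E => H; exists kk.
- by exfalso; apply: H1; case: H2 => kk; rewrite -E => H; exists kk.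
Qed.
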